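(* Fix integers $T,K>1$ and nonnegative numbers $\epsilon(1),\dots,\epsilon(K)$ such that $\min_{j:\epsilon(j)>0}\epsilon(j)^2\ge\frac{2}{T}\sum_{j}\epsilon(j)^2$. Then there exist fixed parameters $m(1),\dots,m(K)$ such that the following holds: for any (possibly randomized) learner strategy $A$ there exists a loss assignment $\{\ell_t(j)\}_{t\le T,j\le K}$ satisfying $|\ell_t(j)-m(j)|\le\epsilon(j)$ for all $t,j$, such that \[ \mathbb{E}_A\Big[\sum_{t=1}^{T}\ell_t(I_t)\Big]-\min_{j=1,\dots,K}\sum_{t=1}^{T}\ell_t(j)\;\ge\; \begin{cases} c\sqrt{T\sum_{j=1}^{K}\epsilon(j)^2} & \text{with bandit feedback},\\ c\sqrt{T\max_{j}\epsilon(j)^2} & \text{with full information feedback},\end{cases} \] where $c>0$ is a universal constant.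
   Context: Repeated game over $K$ arms and $T$ rounds: the loss assignment is fixed in advance (oblivious adversary); at each round the learner picks $I_t\in\{1,\dots,K\}$ and incurs $\ell_t(I_t)$. With bandit feedback she then observes only $\ell_t(I_t)$; with full information she observes $\ell_t(i)$ for all $i$. $I_t$ may depend on previous observations and the learner's internal randomness; the expectation is over that randomness. *)

(* Defs.v *)
From HB Require Import structures.
From mathcomp Require Import all_boot all_order all_algebra.
From mathcomp Require Import reals Rstruct.
Set Implicit Arguments. Unset Strict Implicit. Unset Printing Implicit Defensive.
Import Order.TTheory GRing.Theory Num.Theory.
Local Open Scope ring_scope.

Section Game.
Variable R : realType.
Variable K : nat.

(* A loss assignment (oblivious adversary): round t (0-based) and arm j. *)
Definition loss_assignment := nat -> 'I_K -> R.

Definition is_distr (p : 'I_K -> R) : Prop :=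
  (forall i, 0 <= p i) /\ \sum_(i < K) p i = 1.

(* Bandit feedback: the learner's history is the sequence of
   (arm played, loss observed on that arm).  A (possibly randomized)
   learner is given by the conditional law of I_t given its history. *)
Definition bandit_history := seq ('I_K * R).
Definition bandit_learner := bandit_history -> 'I_K -> R.
Definition valid_bandit_learner (A : bandit_learner) : Prop :=
  forall h, is_distr (A h).

(* Expected loss accumulated over the next n rounds, starting from
   history h (the current round index is size h). *)
Fixpoint bandit_value (A : bandit_learner) (l : loss_assignment)
    (n : nat) (h : bandit_history) : R :=
  match n with
  | 0 => 0
  | n'.+1 => \sum_(i < K) A h i *
       (l (size h) i + bandit_value A l n' (rcons h (i, l (size h) i)))
  end.

Definition bandit_expected_loss (A : bandit_learner) (l : loss_assignment)
    (T : nat) : R := bandit_value A l T [::].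

(* Full-information feedback: the learner observes (its own arm and)
   the whole loss vector of each past round. *)
Definition full_history := seq ('I_K * ('I_K -> R)).
Definition full_learner := full_history -> 'I_K -> R.
Definition valid_full_learner (A : full_learner) : Prop :=
  forall h, is_distr (A h).

Fixpoint full_value (A : full_learner) (l : loss_assignment)
    (n : nat) (h : full_history) : R :=
  match n with
  | 0 => 0
  | n'.+1 => \sum_(i < K) A h i *
       (l (size h) i + full_value A l n' (rcons h (i, l (size h))))
  end.

Definition full_expected_loss (A : full_learner) (l : loss_assignment)
    (T : nat) : R := full_value A l T [::].

(* Minimum of f over 'I_K (defaults to 0 when K = 0). *)
Definition min_over (f : 'I_K -> R) : R :=
  \big[Num.min/ head 0 [seq f j | j <- enum 'I_K]]_(j < K) f j.

(* Cumulative loss of arm j over rounds 1..T (0-based 0..T-1). *)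
Definition cum_loss (l : loss_assignment) (T : nat) (j : 'I_K) : R :=
  \sum_(t < T) l t j.

End Game.

(* Main.v *)
Require Import Defs.
From HB Require Import structures.
From mathcomp Require Import all_boot all_order all_algebra.
From mathcomp Require Import reals Rstruct.
From mathcomp Require Import exp.
From mathcomp Require Import ring lra.
Import Order.TTheory GRing.Theory Num.Theory.
Local Open Scope ring_scope.
Set Implicit Arguments. Unset Strict Implicit. Unset Printing Implicit Defensive.

Notation RR := Rdefinitions.R.

Lemma exists_max_seq (V : eqType) (f : V -> RR) (v0 : V) (s : seq V) :
  exists v, forall u, u \in s -> f u <= f v.
Proof.
elim: s => [|a s [v Hv]]; first by exists v0.
case: (lerP (f a) (f v)) => H.
- exists v => u; rewrite inE => /orP[/eqP->//|]; exact: Hv.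
- exists a => u; rewrite inE => /orP[/eqP->//|/Hv Hu]; exact: (le_trans Hu (ltW H)).
Qed.

Lemma argmax_avg (V : finType) (w f : V -> RR) :
  (forall v, 0 <= w v) -> \sum_v w v = 1 ->
  exists v, \sum_u w u * f u <= f v.
Proof.
move=> w0 w1.
case: (pickP (fun _ : V => true)) => [v0 _|H0]; last first.
  by move: w1; rewrite big_pred0 // => /eqP; rewrite eq_sym oner_eq0.
have [v Hv] := exists_max_seq f v0 (enum V).
exists v; apply: (@le_trans _ _ (\sum_u w u * f v)).
  by apply: ler_sum => u _; apply: ler_wpM2l => //; apply: Hv; rewrite mem_enum.
by rewrite -mulr_suml w1 mul1r.
Qed.

Section ExSec.
Variable K : nat.
Variables (V : finType) (w : V -> RR) (vec : V -> 'I_K -> RR).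

Definition upd (l : loss_assignment RR K) (t : nat) (x : 'I_K -> RR) :
  loss_assignment RR K := fun s => if s == t then x else l s.

Fixpoint Ex (t n : nat) (F : loss_assignment RR K -> RR) {struct n} : RR :=
  if n is n'.+1 then \sum_v w v * Ex t.+1 n' (fun l => F (upd l t (vec v)))
  else F (fun _ _ => 0).

Lemma Ex_ext t n F G : (forall l, F l = G l) -> Ex t n F = Ex t n G.
Proof.
elim: n t F G => [|n IH] t F G H /=; first exact: H.
by apply: eq_bigr => v _; congr (_ * _); apply: IH => l; apply: H.
Qed.

Hypothesis w0 : forall v, 0 <= w v.
Hypothesis w1 : \sum_v w v = 1.

Lemma Ex_const t n c : Ex t n (fun _ => c) = c.
Proof.
elim: n t => [|n IH] t //=.
under eq_bigr => v _ do rewrite IH.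
by rewrite -mulr_suml w1 mul1r.
Qed.

Lemma Ex_add t n F G : Ex t n (fun l => F l + G l) = Ex t n F + Ex t n G.
Proof.
elim: n t F G => [|n IH] t F G //=.
rewrite -big_split /=; apply: eq_bigr => v _.
by rewrite (IH _ (fun l => F (upd l t (vec v))) (fun l => G (upd l t (vec v)))) mulrDr.
Qed.

Lemma Ex_scale t n a F : Ex t n (fun l => a * F l) = a * Ex t n F.
Proof.
elim: n t F => [|n IH] t F //=.
rewrite mulr_sumr; apply: eq_bigr => v _.
by rewrite (IH _ (fun l => F (upd l t (vec v)))) mulrCA.
Qed.

Lemma Ex_sum (I : finType) t n (F : I -> loss_assignment RR K -> RR) :
  Ex t n (fun l => \sum_i F i l) = \sum_i Ex t n (F i).
Proof.
elim: n t F => [|n IH] t F //=.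
rewrite exchange_big /=; apply: eq_bigr => v _.
by rewrite (IH _ (fun i l => F i (upd l t (vec v)))) mulr_sumr.
Qed.

Lemma Ex_opp t n F : Ex t n (fun l => - F l) = - Ex t n F.
Proof.
rewrite -mulN1r -Ex_scale; apply: Ex_ext => l; by rewrite mulN1r.
Qed.

Lemma Ex_sub t n F G : Ex t n (fun l => F l - G l) = Ex t n F - Ex t n G.
Proof. by rewrite Ex_add Ex_opp. Qed.

Variable P : loss_assignment RR K -> Prop.
Hypothesis P0 : P (fun _ _ => 0).
Hypothesis Pupd : forall l t v, P l -> P (upd l t (vec v)).

Lemma Ex_mono t n F G : (forall l, P l -> F l <= G l) -> Ex t n F <= Ex t n G.
Proof.
elim: n t F G => [|n IH] t F G H /=; first exact: H.
apply: ler_sum => v _; apply: ler_wpM2l => //; apply: IH => l Pl.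
exact/H/Pupd.
Qed.

Lemma Ex_exists t n F : exists l, P l /\ Ex t n F <= F l.
Proof.
elim: n t F => [|n IH] t F /=; first by exists (fun _ _ => 0).
have [v Hv] := argmax_avg (fun v => Ex t.+1 n (fun l => F (upd l t (vec v)))) w0 w1.
have [l [Pl Hl]] := IH t.+1 (fun l => F (upd l t (vec v))).
exists (upd l t (vec v)); split; first exact: Pupd.
exact: le_trans Hv Hl.
Qed.

End ExSec.

Lemma bandit_value_local K (A : bandit_learner RR K) l l' n h :
  (forall s, (size h <= s)%N -> l s = l' s) ->
  bandit_value A l n h = bandit_value A l' n h.
Proof.
elim: n h => [|n IH] h H //=.
apply: eq_bigr => i _; rewrite H // (IH (rcons h (i, l' (size h) i))) //.
move=> s; rewrite size_rcons => Hs; apply: H; exact: ltnW.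
Qed.

Lemma full_value_local K (A : full_learner RR K) l l' n h :
  (forall s, (size h <= s)%N -> l s = l' s) ->
  full_value A l n h = full_value A l' n h.
Proof.
elim: n h => [|n IH] h H //=.
apply: eq_bigr => i _; rewrite H // (IH (rcons h (i, l' (size h)))) //.
move=> s; rewrite size_rcons => Hs; apply: H; exact: ltnW.
Qed.

Lemma upd_eq K (l : loss_assignment RR K) t x : upd l t x t = x.
Proof. by rewrite /upd eqxx. Qed.

Lemma upd_neq K (l : loss_assignment RR K) t x s : (t < s)%N -> upd l t x s = l s.
Proof. by rewrite /upd => H; case: eqP => // E; move: H; rewrite E ltnn. Qed.

Section Paths.
Variable K : nat.
Variable A : bandit_learner RR K.
Hypothesis Avalid : valid_bandit_learner A.
Variable x : 'I_K -> bool -> RR.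

Definition hist (p : seq ('I_K * bool)) : bandit_history RR K :=
  [seq (c.1, x c.1 c.2) | c <- p].

Lemma size_hist p : size (hist p) = size p.
Proof. by rewrite size_map. Qed.

Lemma hist_rcons p c : hist (rcons p c) = rcons (hist p) (c.1, x c.1 c.2).
Proof. by rewrite /hist map_rcons. Qed.

Fixpoint Phi (pi : 'I_K -> bool -> RR) (f : 'I_K -> bool -> RR) (n : nat)
   (p : seq ('I_K * bool)) : RR :=
  if n is n'.+1 then
    \sum_(i < K) A (hist p) i * \sum_(b : bool) pi i b * (f i b + Phi pi f n' (rcons p (i, b)))
  else 0.

Definition marg_w (pi : 'I_K -> bool -> RR) (s : {ffun 'I_K -> bool}) : RR :=
  \prod_(k < K) pi k (s k).
Definition marg_v (s : {ffun 'I_K -> bool}) : 'I_K -> RR := fun i => x i (s i).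

Variable pi : 'I_K -> bool -> RR.
Hypothesis pi0 : forall i b, 0 <= pi i b.
Hypothesis pi1 : forall i, \sum_(b : bool) pi i b = 1.

Lemma marg_w0 s : 0 <= marg_w pi s.
Proof. by apply: prodr_ge0 => k _. Qed.

Lemma marg_w1 : \sum_s marg_w pi s = 1.
Proof.
rewrite /marg_w -(bigA_distr_bigA (fun k b => pi k b)).
by apply: big1 => k _; apply: pi1.
Qed.

Lemma marginal i (g : bool -> RR) :
  \sum_(s : {ffun 'I_K -> bool}) marg_w pi s * g (s i) = \sum_(b : bool) pi i b * g b.
Proof.
pose F := fun (k : 'I_K) (b : bool) => if k == i then pi k b * g b else pi k b.
have E : forall s : {ffun 'I_K -> bool}, marg_w pi s * g (s i) = \prod_k F k (s k).
  move=> s; rewrite /marg_w (bigD1 i) //= [RHS](bigD1 i) //= /F eqxx mulrAC; congr (_ * _).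
  by apply: eq_bigr => k /negbTE ->.
have H1 : forall k, k != i -> \sum_(b : bool) F k b = 1.
  move=> k /negbTE Hk; rewrite -(pi1 k); apply: eq_bigr => b _; by rewrite /F Hk.
rewrite (eq_bigr _ (fun s _ => E s)) -(bigA_distr_bigA F) (bigD1 i) //= [X in _ * X]big1 // mulr1.
by apply: eq_bigr => b _; rewrite /F eqxx.
Qed.

Lemma Ex_bandit n p :
  Ex (marg_w pi) marg_v (size p) n (fun l => bandit_value A l n (hist p)) = Phi pi x n p.
Proof.
have w0' : forall s, 0 <= marg_w pi s := marg_w0.
have w1' := marg_w1.
elim: n p => [|n IH] p //=.
have E : forall s, Ex (marg_w pi) marg_v (size p).+1 n
    (fun l => bandit_value A (upd l (size p) (marg_v s)) n.+1 (hist p)) =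
    \sum_i A (hist p) i * (x i (s i) + Phi pi x n (rcons p (i, s i))).
  move=> s.
  rewrite (@Ex_ext _ _ _ _ _ _ _ (fun l => \sum_i A (hist p) i *
      (x i (s i) + bandit_value A l n (hist (rcons p (i, s i)))))); last first.
    move=> l /=; apply: eq_bigr => i _; rewrite size_hist upd_eq hist_rcons.
    congr (_ * (_ + _)); apply: bandit_value_local => t.
    by rewrite size_rcons size_hist => Ht; apply: upd_neq.
  rewrite Ex_sum //.
  apply: eq_bigr => i _.
  rewrite Ex_scale // Ex_add // Ex_const //.
  by rewrite -(size_rcons p (i, s i)) IH.
rewrite (eq_bigr _ (fun s _ => congr1 (fun z => marg_w pi s * z) (E s))).
under eq_bigr => s _ do rewrite mulr_sumr.
rewrite exchange_big /=; apply: eq_bigr => i _.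
under eq_bigr => s _ do rewrite mulrCA.
rewrite -mulr_sumr; congr (_ * _).
exact: (marginal i (fun b => x i b + Phi pi x n (rcons p (i, b)))).
Qed.

End Paths.

Lemma amgm_lam (a b lam : RR) : 0 < lam -> a * b <= (lam * a ^+ 2 + b ^+ 2 / lam) / 2.
Proof.
move=> hl.
have -> : b ^+ 2 / lam = lam * (b / lam) ^+ 2.
  by rewrite expr2 expr2; field; rewrite gt_eqF.
have -> : a * b = lam * (a * (b / lam)).
  by field; rewrite gt_eqF.
set c := b / lam.
have : 0 <= lam * (a - c) ^+ 2 by apply: mulr_ge0; [exact: ltW|exact: sqr_ge0].
move=> H; nra.
Qed.

Lemma real_key (W R F n lam : RR) : 0 <= W -> 0 < R -> 0 <= F <= n -> 0 < lam ->
  W * R * F - W * F <= W * (n / 2 * (lam * (Num.sqrt R - 1) ^+ 2 + (Num.sqrt R + 1) ^+ 2 / lam)).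
Proof.
move=> hW hR /andP[hF0 hFn] hl.
set u := Num.sqrt R.
have hu : 0 <= u by apply: sqrtr_ge0.
have hRu : R = u ^+ 2 by rewrite sqr_sqrtr // ltW.
have ab := amgm_lam `|u - 1| (u + 1) hl.
rewrite real_normK ?num_real // in ab.
have h1 : (R - 1) * F <= `|u - 1| * (u + 1) * n.
  have -> : R - 1 = (u - 1) * (u + 1) by rewrite hRu; ring.
  have hb : 0 <= u + 1 by lra.
  have hn : 0 <= n by exact: le_trans hFn.
  case: (lerP 0 (u - 1)) => h.
    rewrite ger0_norm //.
    have : 0 <= (u - 1) * (u + 1) * (n - F) by apply: mulr_ge0 => //; [apply: mulr_ge0|lra].
    nra.
  rewrite ltr0_norm //.
  have : 0 <= (1 - u) * (u + 1) * F by apply: mulr_ge0 => //; apply: mulr_ge0; lra.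
  have : 0 <= (1 - u) * (u + 1) * n by apply: mulr_ge0 => //; apply: mulr_ge0; lra.
  nra.
have h2 : (R - 1) * F <= n / 2 * (lam * (u - 1) ^+ 2 + (u + 1) ^+ 2 / lam).
  apply: (le_trans h1).
  have hn : 0 <= n by exact: le_trans hFn.
  set Q := (lam * _ + _) in ab *.
  have -> : n / 2 * Q = n * (Q / 2) by ring.
  rewrite mulrC; by apply: ler_wpM2l.
have -> : W * R * F - W * F = W * ((R - 1) * F) by ring.
by apply: ler_wpM2l.
Qed.

Lemma ln_le_sub1 (y : RR) : 0 < y -> ln y <= y - 1.
Proof.
move=> hy; have := @le_ln1Dx _ (y - 1).
have -> : 1 + (y - 1) = y by ring.
apply; lra.
Qed.

Lemma sqrt_ln (R : RR) : 0 < R -> 2 * (1 - Num.sqrt R) <= - ln R.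
Proof.
move=> hR; set u := Num.sqrt R.
have hu : 0 < u by rewrite sqrtr_gt0.
have -> : R = u * u by rewrite -expr2 sqr_sqrtr // ltW.
rewrite lnM ?posrE //; have := ln_le_sub1 hu; lra.
Qed.

Lemma ln_prod (I : Type) (s : seq I) (rho : I -> RR) : (forall c, 0 < rho c) ->
  ln (\prod_(c <- s) rho c) = \sum_(c <- s) ln (rho c).
Proof.
move=> hr; elim: s => [|a s IH]; first by rewrite !big_nil ln1.
rewrite !big_cons lnM ?IH // posrE //.
by apply: prodr_gt0.
Qed.

Section Flat.
Variable K : nat.
Variable A : bandit_learner RR K.
Hypothesis Avalid : valid_bandit_learner A.
Variable x : 'I_K -> bool -> RR.

Fixpoint paths (n : nat) : seq (seq ('I_K * bool)) :=
  if n is n'.+1 then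
    flatten [seq [seq c :: s | s <- paths n'] | c <- index_enum ('I_K * bool)%type]
  else [:: [::]].

Fixpoint Wt (pi : 'I_K -> bool -> RR) (p s : seq ('I_K * bool)) : RR :=
  if s is c :: s' then A (hist x p) c.1 * pi c.1 c.2 * Wt pi (rcons p c) s' else 1.

Definition sumf (f : 'I_K -> bool -> RR) (s : seq ('I_K * bool)) : RR :=
  \sum_(c <- s) f c.1 c.2.

Lemma sum_paths n (H : seq ('I_K * bool) -> RR) :
  \sum_(s <- paths n.+1) H s = \sum_(i < K) \sum_(b : bool) \sum_(s <- paths n) H ((i, b) :: s).
Proof.
rewrite /= big_flatten /= big_map pair_bigA /=.
by apply: eq_bigr => -[i b] _; rewrite big_map.
Qed.

Lemma paths_size n s : s \in paths n -> size s = n.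
Proof.
elim: n s => [|n IH] s /=; first by rewrite inE => /eqP->.
move/flattenP => [ss /mapP[c _ ->] /mapP[s' Hs' ->]] /=.
by rewrite IH.
Qed.

Lemma A_ge0 h i : 0 <= A h i.
Proof. exact: (Avalid h).1. Qed.

Lemma Wt_ge0 pi p s : (forall i b, 0 <= pi i b) -> 0 <= Wt pi p s.
Proof.
move=> hpi; elim: s p => [|c s IH] p //=.
by apply: mulr_ge0; [apply: mulr_ge0; [exact: A_ge0|exact: hpi]|exact: IH].
Qed.

Lemma flat_one pi n p : (forall i, \sum_(b : bool) pi i b = 1) ->
  \sum_(s <- paths n) Wt pi p s = 1.
Proof.
move=> hpi; elim: n p => [|n IH] p; first by rewrite /= big_seq1.
rewrite sum_paths -(Avalid (hist x p)).2; apply: eq_bigr => i _.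
rewrite -[RHS]mulr1 -(hpi i) mulr_sumr; apply: eq_bigr => b _ /=.
by rewrite -mulr_sumr IH mulr1.
Qed.

Lemma flat_Phi pi f n p : (forall i, \sum_(b : bool) pi i b = 1) ->
  Phi A x pi f n p = \sum_(s <- paths n) Wt pi p s * sumf f s.
Proof.
move=> hpi; elim: n p => [|n IH] p; first by rewrite /= big_seq1 /sumf big_nil mulr0.
rewrite sum_paths /=; apply: eq_bigr => i _.
rewrite mulr_sumr; apply: eq_bigr => b _ /=.
have -> : \sum_(s <- paths n) A (hist x p) i * pi i b * Wt pi (rcons p (i, b)) s * sumf f ((i, b) :: s)
   = A (hist x p) i * pi i b * (f i b * \sum_(s <- paths n) Wt pi (rcons p (i, b)) s
        + \sum_(s <- paths n) Wt pi (rcons p (i, b)) s * sumf f s).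
  rewrite mulr_sumr -big_split mulr_sumr; apply: eq_bigr => s _ /=.
  rewrite /sumf big_cons /=; ring.
by rewrite flat_one // mulr1 -IH mulrA.
Qed.

Lemma Wt_ratio pi0 pi1 (rho : 'I_K * bool -> RR) p s :
  (forall i b, pi1 i b = pi0 i b * rho (i, b)) ->
  Wt pi1 p s = Wt pi0 p s * \prod_(c <- s) rho c.
Proof.
move=> hr; elim: s p => [|c s IH] p /=; first by rewrite big_nil mulr1.
rewrite IH big_cons hr; case: c => i b /=; ring.
Qed.

End Flat.

Lemma sum_one_seq (I : Type) (s : seq I) : \sum_(c <- s) (1 : RR) = (size s)%:R.
Proof.
elim: s => [|a s IH]; first by rewrite big_nil.
by rewrite big_cons IH /= -addn1 natrD addrC.
Qed.

Section TVsec.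
Variable K : nat.
Variable A : bandit_learner RR K.
Hypothesis Avalid : valid_bandit_learner A.
Variable x : 'I_K -> bool -> RR.

Lemma TV (pi0 pi1 : 'I_K -> bool -> RR) (rho : 'I_K * bool -> RR) (f : 'I_K -> bool -> RR) n p (lam : RR) :
  (forall i b, 0 <= pi0 i b) -> (forall i, \sum_(b : bool) pi0 i b = 1) ->
  (forall i, \sum_(b : bool) pi1 i b = 1) ->
  (forall c, 0 < rho c) -> (forall i b, pi1 i b = pi0 i b * rho (i, b)) ->
  (forall i b, 0 <= f i b <= 1) -> 0 < lam ->
  Phi A x pi1 f n p - Phi A x pi0 f n p <=
  n%:R / 2 * (lam * Phi A x pi0 (fun i b => - ln (rho (i, b))) n p + 4 / lam).
Proof.
move=> p00 p01 p11 rho0 hr hf hl.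
rewrite !flat_Phi //.
set W := Wt A x pi0 p.
pose Rp := fun s : seq ('I_K * bool) => \prod_(c <- s) rho c.
have Rpos s : 0 < Rp s by apply: prodr_gt0.
pose u := fun s => Num.sqrt (Rp s).
have hu2 s : u s ^+ 2 = Rp s by rewrite sqr_sqrtr // ltW.
have W0 s : 0 <= W s by apply: Wt_ge0.
have hW1 : \sum_(s <- paths K n) W s = 1 by apply: flat_one.
have hWR : \sum_(s <- paths K n) W s * Rp s = 1.
  rewrite -(flat_one Avalid x n p p11); apply: eq_bigr => s _.
  by rewrite (Wt_ratio _ _ _ _ hr).
have hF (s : seq ('I_K * bool)) : s \in paths K n -> 0 <= sumf f s <= n%:R.
  move=> hs; rewrite -(paths_size hs) -sum_one_seq; apply/andP; split.
    by apply: sumr_ge0 => c _; case/andP: (hf c.1 c.2).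
  by apply: ler_sum => c _; case/andP: (hf c.1 c.2).
set c0 := n%:R / 2.
have step1 : \sum_(s <- paths K n) Wt A x pi1 p s * sumf f s - \sum_(s <- paths K n) W s * sumf f s
   <= \sum_(s <- paths K n) W s * (c0 * (lam * (u s - 1) ^+ 2 + (u s + 1) ^+ 2 / lam)).
  rewrite -sumrB big_seq [X in _ <= X]big_seq; apply: ler_sum => s hs.
  rewrite (Wt_ratio _ _ _ _ hr); exact: real_key (W0 s) (Rpos s) (hF s hs) hl.
set X := \sum_(s <- paths K n) W s * u s.
have hY : \sum_(s <- paths K n) W s * (u s - 1) ^+ 2 = 2 - 2 * X.
  rewrite (eq_bigr (fun s => W s * Rp s - 2 * (W s * u s) + W s)); last first.
    by move=> s _; rewrite -hu2; ring.
  by rewrite !big_split /= sumrN -mulr_sumr hWR hW1 /X; ring.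
have hZ : \sum_(s <- paths K n) W s * (u s + 1) ^+ 2 = 2 + 2 * X.
  rewrite (eq_bigr (fun s => W s * Rp s + 2 * (W s * u s) + W s)); last first.
    by move=> s _; rewrite -hu2; ring.
  by rewrite !big_split /= -mulr_sumr hWR hW1 /X; ring.
have hYL : 2 - 2 * X <= \sum_(s <- paths K n) W s * sumf (fun i b => - ln (rho (i, b))) s.
  have -> : 2 - 2 * X = \sum_(s <- paths K n) W s * (2 * (1 - u s)).
    rewrite (eq_bigr (fun s => 2 * W s - 2 * (W s * u s))); last by move=> s _; ring.
    by rewrite big_split /= sumrN -!mulr_sumr hW1 /X; ring.
  apply: ler_sum => s _; apply: ler_wpM2l => //.
  apply: (le_trans (sqrt_ln (Rpos s))).
  rewrite /Rp ln_prod // /sumf -sumrN; apply: ler_sum => -[i b] _ /=; exact: lexx.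
have hX : X <= 1.
  have : 0 <= \sum_(s <- paths K n) W s * (u s - 1) ^+ 2.
    by apply: sumr_ge0 => s _; apply: mulr_ge0 => //; exact: sqr_ge0.
  rewrite hY; lra.
have E : forall s, W s * (c0 * (lam * (u s - 1) ^+ 2 + (u s + 1) ^+ 2 / lam)) =
   c0 * lam * (W s * (u s - 1) ^+ 2) + c0 / lam * (W s * (u s + 1) ^+ 2).
  by move=> s; ring.
rewrite (eq_bigr _ (fun s _ => E s)) big_split /= -!mulr_sumr hY hZ in step1.
apply: (le_trans step1).
set L := \sum_(s <- paths K n) _ in hYL *.
have hc0 : 0 <= c0 by rewrite /c0; apply: divr_ge0 => //; apply: ler0n.
have hli : 0 < lam^-1 by rewrite invr_gt0.
have : c0 * lam * (2 - 2 * X) <= c0 * lam * L.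
  by apply: ler_wpM2l => //; apply: mulr_ge0 => //; exact: ltW.
have : c0 / lam * (2 + 2 * X) <= c0 / lam * 4.
  apply: ler_wpM2l; first by apply: mulr_ge0 => //; exact: ltW.
  lra.
have -> : c0 * (lam * L + 4 / lam) = c0 * lam * L + c0 / lam * 4 by ring.
lra.
Qed.

End TVsec.

Section PhiLemmas.
Variable K : nat.
Variable A : bandit_learner RR K.
Hypothesis Avalid : valid_bandit_learner A.
Variable x : 'I_K -> bool -> RR.

Lemma Phi_avg (pi f g : 'I_K -> bool -> RR) n p :
  (forall i, \sum_(b : bool) pi i b * f i b = \sum_(b : bool) pi i b * g i b) ->
  Phi A x pi f n p = Phi A x pi g n p.
Proof.
move=> H; elim: n p => [|n IH] p //=.
apply: eq_bigr => i _; congr (_ * _).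
rewrite (eq_bigr (fun b => pi i b * f i b + pi i b * Phi A x pi g n (rcons p (i, b)))); last first.
  by move=> b _; rewrite IH mulrDr.
rewrite big_split /= H -big_split; apply: eq_bigr => b _ /=; by rewrite mulrDr.
Qed.

Lemma Phi_scale (pi f : 'I_K -> bool -> RR) a n p :
  Phi A x pi (fun i b => a * f i b) n p = a * Phi A x pi f n p.
Proof.
elim: n p => [|n IH] p /=; first by rewrite mulr0.
rewrite mulr_sumr; apply: eq_bigr => i _; rewrite mulrCA; congr (_ * _).
rewrite mulr_sumr; apply: eq_bigr => b _; rewrite IH; ring.
Qed.

Lemma Phi_sum (J : finType) (pi : 'I_K -> bool -> RR) (F : J -> 'I_K -> bool -> RR) n p :
  (forall i, \sum_(b : bool) pi i b = 1) ->
  Phi A x pi (fun i b => \sum_j F j i b) n p = \sum_j Phi A x pi (F j) n p.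
Proof.
move=> h1; rewrite flat_Phi //.
under [RHS]eq_bigr => j _ do rewrite flat_Phi //.
rewrite exchange_big /=; apply: eq_bigr => s _.
by rewrite /sumf exchange_big mulr_sumr.
Qed.

Lemma Phi_const (pi : 'I_K -> bool -> RR) c n p :
  (forall i, \sum_(b : bool) pi i b = 1) ->
  Phi A x pi (fun _ _ => c) n p = n%:R * c.
Proof.
move=> h1; rewrite flat_Phi //.
rewrite big_seq (eq_bigr (fun s => Wt A x pi p s * (n%:R * c))); last first.
  move=> s hs; congr (_ * _); rewrite -(paths_size hs) /sumf.
  elim: s {hs} => [|a s IH]; first by rewrite big_nil mul0r.
  by rewrite big_cons IH /= -addn1 natrD; ring.
by rewrite -big_seq -mulr_suml flat_one // mul1r.
Qed.

Lemma Phi_ge0 (pi f : 'I_K -> bool -> RR) n p :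
  (forall i b, 0 <= pi i b) -> (forall i, \sum_(b : bool) pi i b = 1) ->
  (forall i b, 0 <= f i b) -> 0 <= Phi A x pi f n p.
Proof.
move=> h0 h1 hf; rewrite flat_Phi //; apply: sumr_ge0 => s _.
by apply: mulr_ge0; [exact: Wt_ge0 | apply: sumr_ge0 => c _].
Qed.

End PhiLemmas.

Lemma min_over_le K (f : 'I_K -> RR) j : min_over f <= f j.
Proof.
rewrite /min_over.
have : j \in index_enum 'I_K by rewrite mem_index_enum.
elim: (index_enum 'I_K) => [|a r IH] //.
rewrite inE big_cons => /orP[/eqP<-|/IH H]; rewrite ge_min ?lexx //.
by rewrite H orbT.
Qed.

Section ExCum.
Variable K : nat.
Variables (V : finType) (w : V -> RR) (vec : V -> 'I_K -> RR).
Hypothesis w0 : forall v, 0 <= w v.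
Hypothesis w1 : \sum_v w v = 1.

Lemma upd_shift (l : loss_assignment RR K) t v n j :
  \sum_(i < n.+1) upd l t v (t + i)%N j = v j + \sum_(i < n) l (t.+1 + i)%N j.
Proof.
rewrite big_ord_recl /= addn0 upd_eq; congr (_ + _).
by apply: eq_bigr => i _; rewrite upd_neq ?addSnnS // -addSnnS leq_addr.
Qed.

Lemma Ex_cum j t n a :
  Ex w vec t n (fun l => a + \sum_(i < n) l (t + i)%N j) =
  a + n%:R * \sum_v w v * vec v j.
Proof.
elim: n t a => [|n IH] t a /=; first by rewrite big_ord0 mul0r !addr0.
rewrite (eq_bigr (fun v => w v * (a + vec v j + n%:R * \sum_v w v * vec v j))); last first.
  move=> v _; congr (_ * _); rewrite -(IH t.+1); apply: Ex_ext => l.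
  by rewrite upd_shift addrA.
under eq_bigr => v _ do rewrite mulrDr mulrDr.
rewrite !big_split /= -!mulr_suml w1 !mul1r -addn1 natrD; ring.
Qed.

Fixpoint Walk (e : RR) (n : nat) (a : RR) (g : RR -> RR) : RR :=
  if n is n'.+1 then (Walk e n' (a + e) g + Walk e n' (a - e) g) / 2 else g a.

End ExCum.

Lemma Walk_mono e n a (g h : RR -> RR) : (forall y, g y <= h y) -> Walk e n a g <= Walk e n a h.
Proof.
move=> H; elim: n a => [|n IH] a /=; first exact: H.
rewrite ler_pM2r ?invr_gt0 //.
by apply: lerD; apply: IH.
Qed.

Lemma Walk_poly e n a (c1 c2 c4 : RR) :
  Walk e n a (fun y => c1 * y + c2 * y ^+ 2 + c4 * y ^+ 4) =
  c1 * a + c2 * (a ^+ 2 + n%:R * e ^+ 2)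
  + c4 * (a ^+ 4 + 6 * n%:R * e ^+ 2 * a ^+ 2 + (3 * n%:R ^+ 2 - 2 * n%:R) * e ^+ 4).
Proof.
elim: n a => [|n IH] a /=; first by ring.
by rewrite !IH -addn1 natrD; field.
Qed.

Lemma abs_poly (y al : RR) : 0 < al ->
  y ^+ 2 / (2 * al) - y ^+ 4 / (18 * al ^+ 3) <= `|y|.
Proof.
move=> ha; set z := `|y|.
have hz : 0 <= z by apply: normr_ge0.
have e2 : y ^+ 2 = z ^+ 2 by rewrite real_normK ?num_real.
have e4 : y ^+ 4 = z ^+ 4 by rewrite -[4%N]/(2 * 2)%N !exprM e2.
rewrite e2 e4.
have key : 0 <= z * (z * (z - 3 * al) ^+ 2 + 6 * al * (z - 3 / 2 * al) ^+ 2 + 9 / 2 * al ^+ 3).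
  apply: mulr_ge0 => //; apply: addr_ge0; first apply: addr_ge0.
  - by apply: mulr_ge0 => //; exact: sqr_ge0.
  - by apply: mulr_ge0; [apply: mulr_ge0 => //; exact: ltW|exact: sqr_ge0].
  - by apply: mulr_ge0; [lra | apply: exprn_ge0; exact: ltW].
have E : z - (z ^+ 2 / (2 * al) - z ^+ 4 / (18 * al ^+ 3)) =
   z * (z * (z - 3 * al) ^+ 2 + 6 * al * (z - 3 / 2 * al) ^+ 2 + 9 / 2 * al ^+ 3) / (18 * al ^+ 3).
  by field; rewrite gt_eqF.
rewrite -subr_ge0 E; apply: divr_ge0 => //.
by apply: mulr_ge0 => //; apply: exprn_ge0; exact: ltW.
Qed.

Section Fluct.
Variable K : nat.
Variables (V : finType) (w : V -> RR) (vec : V -> 'I_K -> RR).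
Hypothesis w0 : forall v, 0 <= w v.
Hypothesis w1 : \sum_v w v = 1.
Hypothesis wmean : forall i, \sum_v w v * vec v i = 0.

Lemma Ex_bandit_zero (A : bandit_learner RR K) n h :
  Ex w vec (size h) n (fun l => bandit_value A l n h) = 0.
Proof.
elim: n h => [|n IH] h //=.
apply: (@eq_trans _ _ (\sum_v w v * \sum_i A h i * vec v i)).
  apply: eq_bigr => v _; congr (_ * _).
  rewrite (@Ex_ext _ _ _ _ _ _ _ (fun l => \sum_i A h i *
      (vec v i + bandit_value A l n (rcons h (i, vec v i))))); last first.
    move=> l /=; apply: eq_bigr => i _; rewrite upd_eq.
    congr (_ * (_ + _)); apply: bandit_value_local => t.
    by rewrite size_rcons => Ht; apply: upd_neq.
  rewrite Ex_sum //; apply: eq_bigr => i _.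
  by rewrite Ex_scale // Ex_add // Ex_const // -(size_rcons h (i, vec v i)) IH addr0.
under eq_bigr => v _ do rewrite mulr_sumr.
rewrite exchange_big /=; apply: big1 => i _.
under eq_bigr => v _ do rewrite mulrCA.
by rewrite -mulr_sumr wmean mulr0.
Qed.

Lemma Ex_full_zero (A : full_learner RR K) n h :
  Ex w vec (size h) n (fun l => full_value A l n h) = 0.
Proof.
elim: n h => [|n IH] h //=.
apply: (@eq_trans _ _ (\sum_v w v * \sum_i A h i * vec v i)).
  apply: eq_bigr => v _; congr (_ * _).
  rewrite (@Ex_ext _ _ _ _ _ _ _ (fun l => \sum_i A h i *
      (vec v i + full_value A l n (rcons h (i, vec v))))); last first.
    move=> l /=; apply: eq_bigr => i _; rewrite upd_eq.
    congr (_ * (_ + _)); apply: full_value_local => t.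
    by rewrite size_rcons => Ht; apply: upd_neq.
  rewrite Ex_sum //; apply: eq_bigr => i _.
  by rewrite Ex_scale // Ex_add // Ex_const // -(size_rcons h (i, vec v)) IH addr0.
under eq_bigr => v _ do rewrite mulr_sumr.
rewrite exchange_big /=; apply: big1 => i _.
under eq_bigr => v _ do rewrite mulrCA.
by rewrite -mulr_sumr wmean mulr0.
Qed.

End Fluct.

Section Walk.
Variable K : nat.
Variable js : 'I_K.
Variable e : RR.
Definition fl_w (b : bool) : RR := 1 / 2.
Definition fl_vec (b : bool) : 'I_K -> RR :=
  fun i => if i == js then (if b then e else - e) else 0.

Lemma fl_w0 b : 0 <= fl_w b.
Proof. by rewrite /fl_w; apply: divr_ge0. Qed.

Lemma fl_w1 : \sum_b fl_w b = 1.
Proof. by rewrite big_bool /= /fl_w; field. Qed.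

Lemma fl_mean i : \sum_b fl_w b * fl_vec b i = 0.
Proof. rewrite big_bool /= /fl_w /fl_vec; case: (i == js); ring. Qed.

Lemma Ex_walk (g : RR -> RR) t n a :
  Ex fl_w fl_vec t n (fun l => g (a + \sum_(i < n) l (t + i)%N js)) = Walk e n a g.
Proof.
elim: n t a => [|n IH] t a /=; first by rewrite big_ord0 addr0.
rewrite big_bool /= /fl_w.
rewrite (@Ex_ext _ _ _ _ _ _ _ (fun l => g ((a + e) + \sum_(i < n) l (t.+1 + i)%N js))); last first.
  by move=> l; rewrite upd_shift /fl_vec eqxx addrA.
rewrite (@Ex_ext _ _ _ _ t.+1 n (fun l => g (a + \sum_(i < n.+1) upd l t (fl_vec false) (t + i)%N js))
   (fun l => g ((a - e) + \sum_(i < n) l (t.+1 + i)%N js))); last first.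
  by move=> l; rewrite upd_shift /fl_vec eqxx addrA.
by rewrite !IH; field.
Qed.

End Walk.

Lemma kl_bound (d : RR) : 0 <= d -> d ^+ 2 <= 1 / 2 ->
  1 / 2 * (- ln (1 - d)) + 1 / 2 * (- ln (1 + d)) <= d ^+ 2.
Proof.
move=> hd hd2.
have hd1 : d < 1 by nra.
set q := 1 - d ^+ 2.
have hq : 1 / 2 <= q by rewrite /q; lra.
have hq0 : 0 < q by lra.
have -> : 1 / 2 * (- ln (1 - d)) + 1 / 2 * (- ln (1 + d)) = 1 / 2 * ln q^-1.
  rewrite lnV ?posrE // /q.
  have -> : 1 - d ^+ 2 = (1 - d) * (1 + d) by ring.
  rewrite lnM ?posrE; [ring | lra | lra].
have hqi : 0 < q^-1 by rewrite invr_gt0.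
have := ln_le_sub1 hqi.
have : q^-1 <= 1 + 2 * d ^+ 2.
  have h : 1 <= q * (1 + 2 * d ^+ 2) by rewrite /q; nra.
  by rewrite -[q^-1]mul1r ler_pdivrMr // mulrC.
lra.
Qed.

Definition xloss K (eps : 'I_K -> RR) : 'I_K -> bool -> RR :=
  fun i b => eps i * (if b then 1 else -1).
Definition pi_half K : 'I_K -> bool -> RR := fun _ _ => 1 / 2.
Definition pi_bias K (j : 'I_K) (d : RR) : 'I_K -> bool -> RR :=
  fun i b => if i == j then (if b then (1 - d) / 2 else (1 + d) / 2) else 1 / 2.
Definition rho_bias K (j : 'I_K) (d : RR) : 'I_K * bool -> RR :=
  fun c => if c.1 == j then (if c.2 then 1 - d else 1 + d) else 1.
Definition Nf K (j : 'I_K) : 'I_K -> bool -> RR := fun i _ => (i == j)%:R.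

Definition nj K (A : bandit_learner RR K) (eps : 'I_K -> RR) (T : nat) (j : 'I_K) : RR :=
  Phi A (xloss eps) (@pi_half K) (Nf j) T [::].

Lemma pi_half0 K i b : 0 <= @pi_half K i b.
Proof. by rewrite /pi_half; apply: divr_ge0. Qed.
Lemma pi_half1 K i : \sum_(b : bool) @pi_half K i b = 1.
Proof. by rewrite big_bool /= /pi_half; field. Qed.

Section Biased.
Variable K : nat.
Variable T : nat.
Variable A : bandit_learner RR K.
Hypothesis Av : valid_bandit_learner A.
Variable eps : 'I_K -> RR.
Variable j : 'I_K.
Variable d : RR.
Hypothesis hd : 0 <= d.
Hypothesis hd2 : d ^+ 2 <= 1 / 2.

Lemma hd1 : d < 1.
Proof. have := hd2; rewrite expr2 => h. case: (lerP 1 d) => h1 //. nra. Qed.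

Lemma pi_bias0 i b : 0 <= pi_bias j d i b.
Proof.
have := hd1; rewrite /pi_bias; move=> h1; case: (i == j); case: b => /=; apply: divr_ge0 => //; [rewrite subr_ge0; exact: ltW | exact: addr_ge0].
Qed.
Lemma pi_bias1 i : \sum_(b : bool) pi_bias j d i b = 1.
Proof. rewrite big_bool /= /pi_bias; case: (i == j); by field. Qed.
Lemma rho_bias0 c : 0 < rho_bias j d c.
Proof. have h0 := hd; have := hd1; rewrite /rho_bias; move=> h1; case: (c.1 == j); case: (c.2) => /=; lra. Qed.
Lemma ratio_bias i b : pi_bias j d i b = @pi_half K i b * rho_bias j d (i, b).
Proof. rewrite /pi_bias /pi_half /rho_bias /=; case: (i == j); case: b; by field. Qed.

Lemma biased_j (lam : RR) : 0 <= eps j -> 0 < lam ->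
  eps j * d * (T%:R - (nj A eps T j + T%:R / 2 * (lam * d ^+ 2 * nj A eps T j + 4 / lam)))
  <= Ex (marg_w (pi_bias j d)) (marg_v (xloss eps)) 0 T
       (fun l => bandit_expected_loss A l T - min_over (cum_loss l T)).
Proof.
move=> he hl.
set x := xloss eps.
have w0 := marg_w0 pi_bias0.
have w1 := marg_w1 pi_bias1.
rewrite Ex_sub //.
have EV : Ex (marg_w (pi_bias j d)) (marg_v x) 0 T (fun l => bandit_expected_loss A l T)
   = Phi A x (pi_bias j d) x T [::].
  exact: (Ex_bandit A x pi_bias0 pi_bias1 T [::]).
have EP : Phi A x (pi_bias j d) x T [::] = - (eps j * d) * Phi A x (pi_bias j d) (Nf j) T [::].
  rewrite -Phi_scale; apply: Phi_avg => i; rewrite !big_bool /= /x /xloss /pi_bias /Nf.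
  by case: eqP => [->|_]; rewrite /=; ring.
have Emin : Ex (marg_w (pi_bias j d)) (marg_v x) 0 T (fun l => min_over (cum_loss l T))
   <= T%:R * (- (eps j * d)).
  apply: (@le_trans _ _ (Ex (marg_w (pi_bias j d)) (marg_v x) 0 T
     (fun l => 0 + \sum_(i < T) l (0 + i)%N j))).
    apply: (Ex_mono w0 (P := fun _ => True)) => // l _.
    by rewrite add0r; exact: min_over_le.
  rewrite Ex_cum // add0r le_eqVlt; apply/orP; left; apply/eqP; congr (_ * _).
  rewrite (marginal pi_bias1 j (fun b => x j b)) big_bool /= /x /xloss /pi_bias eqxx.
  by field.
have hNf : forall i b, 0 <= Nf j i b <= 1.
  move=> i b; rewrite /Nf; case: (i == j) => /=; by rewrite ?ler01 ?lexx.
have TV2 := TV Av x T [::] (@pi_half0 K) (@pi_half1 K) pi_bias1 rho_bias0 ratio_bias hNf hl.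
set kl := 1 / 2 * (- ln (1 - d)) + 1 / 2 * (- ln (1 + d)).
have KL : Phi A x (@pi_half K) (fun i b => - ln (rho_bias j d (i, b))) T [::]
    = kl * nj A eps T j.
  rewrite /nj -Phi_scale; apply: Phi_avg => i; rewrite !big_bool /= /rho_bias /pi_half /Nf /=.
  case: (i == j) => /=; rewrite ?ln1 /kl; by field.
rewrite KL in TV2.
have hn0 : 0 <= nj A eps T j.
  apply: Phi_ge0 => //; try exact: pi_half0; try exact: pi_half1; by move=> i b; case/andP: (hNf i b).
have hkl : kl <= d ^+ 2 by apply: kl_bound.
rewrite EV EP.
set Pj := Phi A x (pi_bias j d) (Nf j) T [::] in TV2 *.
set n := nj A eps T j in TV2 hn0 *.
have hT : 0 <= T%:R / 2 :> RR by apply: divr_ge0 => //; exact: ler0n.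
have h1 : Pj <= n + T%:R / 2 * (lam * d ^+ 2 * n + 4 / lam).
  have : lam * kl * n <= lam * d ^+ 2 * n.
    by apply: ler_wpM2r => //; apply: ler_wpM2l => //; exact: ltW.
  move=> h; have : T%:R / 2 * (lam * (kl * n) + 4 / lam) <= T%:R / 2 * (lam * d ^+ 2 * n + 4 / lam).
    by apply: ler_wpM2l => //; rewrite mulrA lerD2r.
  rewrite (_ : Phi A x (@pi_half K) (Nf j) T [::] = n) // in TV2; move: TV2; lra.
have hed : 0 <= eps j * d by apply: mulr_ge0.
have h2 : eps j * d * (T%:R - (n + T%:R / 2 * (lam * d ^+ 2 * n + 4 / lam))) <= eps j * d * (T%:R - Pj).
  by apply: ler_wpM2l => //; lra.
apply: (le_trans h2).
move: Emin; set Em := Ex _ _ _ _ _ => hEm.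
have -> : eps j * d * (T%:R - Pj) = - (eps j * d) * Pj - T%:R * (- (eps j * d)) by ring.
by apply: lerB.
Qed.
End Biased.

Lemma max_poly (y al : RR) : 0 < al ->
  (- (1 / 2)) * y + 1 / (4 * al) * y ^+ 2 + (- (1 / (36 * al ^+ 3))) * y ^+ 4 <= Num.max (- y) 0.
Proof.
move=> ha; have := abs_poly y ha => h.
have E : (- (1 / 2)) * y + 1 / (4 * al) * y ^+ 2 + (- (1 / (36 * al ^+ 3))) * y ^+ 4
   = (y ^+ 2 / (2 * al) - y ^+ 4 / (18 * al ^+ 3) - y) / 2.
  by field; rewrite gt_eqF.
rewrite E.
have : (`|y| - y) / 2 <= Num.max (- y) 0.
  case: (lerP 0 y) => hy.
    rewrite ger0_norm // subrr mul0r le_max lexx orbT //.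
  rewrite ltr0_norm // le_max; apply/orP; left; lra.
move=> h2; apply: le_trans h2; lra.
Qed.

Lemma walk_lb (e : RR) (T : nat) : 0 <= e ->
  e * Num.sqrt T%:R / 6 <= Walk e T 0 (fun y => Num.max (- y) 0).
Proof.
move=> he.
case: (T =P 0%N) => [->|hT0].
  by rewrite sqrtr0 mulr0 mul0r /= le_max lexx orbT.
have hT : 0 < T%:R :> RR by rewrite ltr0n lt0n; apply/eqP.
have hs : 0 < Num.sqrt T%:R :> RR by rewrite sqrtr_gt0.
case: (e =P 0) => [->|he0].
  rewrite !mul0r.
  apply: le_trans (Walk_mono _ _ _ (g := fun y => 0 * y + 0 * y ^+ 2 + 0 * y ^+ 4) _).
    by rewrite Walk_poly; lra.
  by move=> y; rewrite !mul0r !addr0 le_max lexx orbT.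
have he' : 0 < e by rewrite lt_neqAle eq_sym; apply/andP; split => //; apply/eqP.
set al := e * Num.sqrt T%:R.
have hal : 0 < al by apply: mulr_gt0.
apply: le_trans (Walk_mono _ _ _ (fun y => max_poly y hal)).
rewrite Walk_poly.
have hal2 : al ^+ 2 = T%:R * e ^+ 2 by rewrite /al exprMn sqr_sqrtr ?ler0n // mulrC.
have E1 : 1 / (4 * al) * (0 ^+ 2 + T%:R * e ^+ 2) = al / 4.
  by rewrite expr0n /= add0r -hal2; field; rewrite gt_eqF.
have E2 : (3 * T%:R ^+ 2 - 2 * T%:R) * e ^+ 4 <= 3 * al ^+ 4.
  have -> : al ^+ 4 = (al ^+ 2) ^+ 2 by rewrite -exprM.
  rewrite hal2.
  have : 0 <= 2 * T%:R * e ^+ 4 :> RR.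
    by apply: mulr_ge0; [apply: mulr_ge0 => //; exact: ltW| apply: exprn_ge0].
  have -> : 3 * (T%:R * e ^+ 2) ^+ 2 = 3 * T%:R ^+ 2 * e ^+ 4 :> RR.
    by rewrite exprMn -exprM mulrA.
  move=> h; rewrite mulrBl; lra.
have hc4 : 0 <= 1 / (36 * al ^+ 3).
  by apply: divr_ge0 => //; apply: mulr_ge0 => //; apply: exprn_ge0; exact: ltW.
have E3 : 1 / (36 * al ^+ 3) * (3 * al ^+ 4) = al / 12.
  by field; rewrite gt_eqF.
have E4 : 1 / (36 * al ^+ 3) * (0 ^+ 4 + 6 * T%:R * e ^+ 2 * 0 ^+ 2 + (3 * T%:R ^+ 2 - 2 * T%:R) * e ^+ 4)
   <= al / 12.
  rewrite !expr0n /= mulr0 !add0r -E3; exact: ler_wpM2l.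
rewrite mulr0 add0r E1.
have -> : e * Num.sqrt T%:R / 6 = al / 4 - al / 12 by rewrite /al; field.
move: E4; set Z := 1 / (36 * al ^+ 3) * _ => E4.
have -> : al / 4 + - (1 / (36 * al ^+ 3)) * (0 ^+ 4 + 6 * T%:R * e ^+ 2 * 0 ^+ 2 +
    (3 * T%:R ^+ 2 - 2 * T%:R) * e ^+ 4) = al / 4 - Z by rewrite /Z mulNr.
lra.
Qed.

Lemma other_arm K (js : 'I_K) : (1 < K)%N -> exists k : 'I_K, k != js.
Proof.
move=> hK.
have h0 : (0 < K)%N by exact: ltnW.
case: (js =P Ordinal h0) => [->|/eqP hne]; last by exists (Ordinal h0); rewrite eq_sym.
by exists (Ordinal hK).
Qed.

Lemma fluct_exists K T (eps : 'I_K -> RR) (js : 'I_K) (val : loss_assignment RR K -> RR) :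
  (1 < K)%N -> (forall j, 0 <= eps j) ->
  Ex fl_w (fl_vec js (eps js)) 0 T val = 0 ->
  exists l : loss_assignment RR K, (forall t j, `|l t j - 0| <= eps j) /\
    eps js * Num.sqrt T%:R / 6 <= val l - min_over (cum_loss l T).
Proof.
move=> hK heps hval.
set e := eps js.
have [k hk] := other_arm js hK.
pose P := fun l : loss_assignment RR K =>
  (forall s k, k != js -> l s k = 0) /\ (forall s k, `|l s k - 0| <= eps k).
have P0 : P (fun _ _ => 0).
  by split => // s k0; rewrite subr0 normr0; exact: heps.
have Pupd : forall l t v, P l -> P (upd l t (fl_vec js e v)).
  move=> l t v [H1 H2]; split => s k0; rewrite /upd; case: (s == t).
  - by rewrite /fl_vec => /negbTE ->.
  - exact: H1.
  - rewrite /fl_vec subr0; case: (k0 =P js) => [->|_]; last by rewrite normr0.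
    by case: v; rewrite ?normrN ger0_norm ?lexx //; exact: heps.
  - exact: H2.
have [l [Pl Hl]] := Ex_exists fl_w0 fl_w1 P0 Pupd 0 T (fun l => val l - min_over (cum_loss l T)).
exists l; split; first by case: Pl.
apply: le_trans Hl.
rewrite Ex_sub hval sub0r -Ex_opp.
apply: (le_trans (walk_lb T (heps js))).
rewrite -(Ex_walk js e (fun y => Num.max (- y) 0) 0 T 0).
apply: (Ex_mono fl_w0 P0 Pupd).
move=> l0 [H1 _]; rewrite ge_max; apply/andP; split.
  rewrite lerN2 add0r; apply: le_trans (min_over_le _ js) _.
  rewrite /cum_loss le_eqVlt; apply/orP; left; apply/eqP.
  by apply: eq_bigr => i _; rewrite add0n.
rewrite oppr_ge0; apply: le_trans (min_over_le _ k) _.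
by rewrite /cum_loss big1 // => i _; apply: H1.
Qed.

Lemma nj_sum K (A : bandit_learner RR K) (Av : valid_bandit_learner A) eps T :
  \sum_(j < K) nj A eps T j = T%:R.
Proof.
rewrite /nj -(Phi_sum Av); last exact: pi_half1.
rewrite (@Phi_avg _ A (xloss eps) _ _ (fun _ _ => 1)); last first.
  move=> i; apply: eq_bigr => b _; congr (_ * _).
  rewrite /Nf (bigD1 i) //= eqxx big1 ?addr0 // => j /negbTE.
  by rewrite eq_sym => ->.
rewrite (Phi_const Av) ?mulr1 //; exact: pi_half1.
Qed.

Lemma nj_ge0 K (A : bandit_learner RR K) (Av : valid_bandit_learner A) eps T j :
  0 <= nj A eps T j.
Proof.
apply: Phi_ge0 => //; try exact: pi_half0; try exact: pi_half1.
Qed.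

Lemma biased_exists K T (A : bandit_learner RR K) (Av : valid_bandit_learner A)
    (eps : 'I_K -> RR) (M : RR) :
  (1 < T)%N -> (1 < K)%N -> (forall j, 0 <= eps j) ->
  (forall j, 0 < eps j -> eps j ^+ 2 >= 2 / T%:R * \sum_(i < K) eps i ^+ 2) ->
  (forall j, eps j ^+ 2 <= M) -> 4 * M < \sum_(i < K) eps i ^+ 2 ->
  exists l : loss_assignment RR K, (forall t j, `|l t j - 0| <= eps j) /\
    1 / 16 * Num.sqrt (T%:R * \sum_(j < K) eps j ^+ 2)
      <= bandit_expected_loss A l T - min_over (cum_loss l T).
Proof.
move=> hT hK heps hcond hM hS.
set S := \sum_(i < K) eps i ^+ 2 in hcond hS *.
have hM0 : 0 <= M by apply: le_trans (hM (Ordinal hK)); exact: sqr_ge0.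
have hS0 : 0 < S by lra.
have hTr : 0 < T%:R :> RR by rewrite ltr0n; exact: ltnW.
set Q := Num.sqrt (T%:R * S).
have hQ : 0 < Q by rewrite sqrtr_gt0; apply: mulr_gt0.
have hQ2 : Q ^+ 2 = T%:R * S by rewrite sqr_sqrtr //; apply: ltW; apply: mulr_gt0.
set G := Q / (8 * T%:R).
have hG : 0 <= G by apply: divr_ge0; [exact: ltW | apply: mulr_ge0 => //; exact: ltW].
have hG2 : G ^+ 2 = S / (64 * T%:R).
  rewrite /G expr_div_n hQ2; field; rewrite gt_eqF //.
pose d := fun j => G / eps j.
have hd : forall j, 0 <= d j /\ d j ^+ 2 <= 1 / 2.
  move=> j; case: (eps j =P 0) => [h0|hne].
    by rewrite /d h0 invr0 mulr0 expr0n /=; split => //; lra.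
  have epos : 0 < eps j by rewrite lt_neqAle eq_sym; apply/andP; split; [apply/eqP|].
  split; first by apply: divr_ge0 => //; exact: ltW.
  have hc := hcond j epos.
  set a := d j ^+ 2.
  have ha : 0 <= a by exact: sqr_ge0.
  have hae : a * eps j ^+ 2 = S / (64 * T%:R).
    by rewrite /a /d -hG2 expr_div_n; field; rewrite gt_eqF.
  set b := 2 / T%:R * S in hc.
  have hb : 0 < b by apply: mulr_gt0 => //; apply: divr_gt0.
  have h1 : a * b <= a * eps j ^+ 2 by apply: ler_wpM2l.
  have h2 : S / (64 * T%:R) = b / 128 by rewrite /b; field; rewrite gt_eqF.
  have h3 : a * b <= 1 / 2 * b by lra.
  by rewrite ler_pM2r in h3.
pose w := fun j => eps j ^+ 2 / S.
have hw0 : forall j, 0 <= w j by move=> j; apply: divr_ge0; [exact: sqr_ge0 | exact: ltW].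
have hw1 : \sum_j w j = 1 by rewrite /w -mulr_suml divff // gt_eqF.
pose x := xloss eps.
pose f := fun j => Ex (marg_w (pi_bias j (d j))) (marg_v x) 0 T
   (fun l => bandit_expected_loss A l T - min_over (cum_loss l T)).
have [j0 hj0] := argmax_avg f hw0 hw1.
have [d0 d02] := hd j0.
pose P := fun l : loss_assignment RR K => forall s k, `|l s k - 0| <= eps k.
have P0 : P (fun _ _ => 0) by move=> s k; rewrite subr0 normr0.
have Pupd : forall l t v, P l -> P (upd l t (marg_v x v)).
  move=> l t v Pl s k; rewrite /upd; case: (s == t) => //.
  rewrite /marg_v /x /xloss subr0; case: (v k); rewrite ?mulr1 ?mulrN1 ?normrN ger0_norm //.
have [l [Pl Hl]] := Ex_exists (marg_w0 (pi_bias0 j0 d0 d02)) (marg_w1 (pi_bias1 j0 (d j0))) P0 Pupd 0 T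
   (fun l => bandit_expected_loss A l T - min_over (cum_loss l T)).
exists l; split => //.
apply: le_trans Hl; apply: le_trans hj0.
pose n := fun j => nj A eps T j.
have hn0 : forall j, 0 <= n j by move=> j; exact: nj_ge0.
have hnsum : \sum_j n j = T%:R by exact: nj_sum.
set c3 := G * T%:R / 2 * 16 * (G ^+ 2 / S).
set c4 := G * T%:R / 2 * (4 / 16).
have hc3 : 0 <= c3.
  have h1 : 0 <= G * T%:R by apply: mulr_ge0 => //; exact: ltW.
  have h2 : 0 <= G ^+ 2 / S by apply: divr_ge0; [exact: sqr_ge0 | exact: ltW].
  have := mulr_ge0 h1 h2; rewrite /c3; lra.
have Lb : forall j, G * T%:R * w j - G * (w j * n j) - c3 * n j - c4 * w j <= w j * f j.
  move=> j; case: (eps j =P 0) => [h0|hne].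
    have wj0 : w j = 0 by rewrite /w h0 expr0n /= mul0r.
    rewrite wj0 !mulr0 !mul0r mulr0.
    have : 0 <= c3 * n j by apply: mulr_ge0.
    lra.
  have epos : 0 < eps j by rewrite lt_neqAle eq_sym; apply/andP; split; [apply/eqP|].
  have [dj0 dj2] := hd j.
  have hb := biased_j T Av dj0 dj2 (lam := 16) (heps j) (ltr0n _ 16).
  have := ler_wpM2l (hw0 j) hb.
  have -> : w j * (eps j * d j * (T%:R - (nj A eps T j + T%:R / 2 * (16 * d j ^+ 2 * nj A eps T j + 4 / 16))))
     = G * T%:R * w j - G * (w j * n j) - c3 * n j - c4 * w j.
    rewrite /c3 /c4 /n /w /d; field; rewrite ?gt_eqF //; apply/eqP => //.
  by [].
have Hs : \sum_(j < K) (G * T%:R * w j - G * (w j * n j) - c3 * n j - c4 * w j)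
    <= \sum_(j < K) w j * f j by apply: ler_sum => j _; exact: Lb.
rewrite !sumrB -!mulr_sumr hw1 hnsum in Hs.
apply: le_trans Hs.
set X := \sum_(i < K) w i * n i.
have hX : X <= T%:R / 4.
  apply: (@le_trans _ _ (\sum_(i < K) M / S * n i)).
    apply: ler_sum => i _; apply: ler_wpM2r => //.
    by rewrite /w ler_pM2r ?invr_gt0.
  rewrite -mulr_sumr hnsum.
  have : M / S <= 1 / 4.
    by rewrite ler_pdivrMr // mul1r; lra.
  move=> h; have := ler_wpM2r (ltW hTr) h; lra.
have hGX : G * X <= G * T%:R / 4.
  by rewrite -mulrA; apply: ler_wpM2l.
have hY : G * T%:R = Q / 8 by rewrite /G; field; rewrite gt_eqF.
have hc3T : c3 * T%:R = G * T%:R / 8 by rewrite /c3 hG2; field; rewrite !gt_eqF.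
have hc4 : c4 = G * T%:R / 8 by rewrite /c4; field.
rewrite mulr1 hc3T hc4.
lra.
Qed.

Theorem theorem2 :
  exists c : Rdefinitions.R, 0 < c /\
  forall (T K : nat) (eps : 'I_K -> Rdefinitions.R),
    (1 < T)%N -> (1 < K)%N ->
    (forall j, 0 <= eps j) ->
    (forall j, 0 < eps j ->
       eps j ^+ 2 >= 2 / T%:R * \sum_(i < K) eps i ^+ 2) ->
    exists m : 'I_K -> Rdefinitions.R,
      (forall A : bandit_learner Rdefinitions.R K,
         valid_bandit_learner A ->
         exists l : loss_assignment Rdefinitions.R K,
           (forall (t : nat) (j : 'I_K), (t < T)%N -> `|l t j - m j| <= eps j) /\
           bandit_expected_loss A l T - min_over (cum_loss l T)
             >= c * Num.sqrt (T%:R * \sum_(j < K) eps j ^+ 2))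
      /\
      (forall A : full_learner Rdefinitions.R K,
         valid_full_learner A ->
         exists l : loss_assignment Rdefinitions.R K,
           (forall (t : nat) (j : 'I_K), (t < T)%N -> `|l t j - m j| <= eps j) /\
           full_expected_loss A l T - min_over (cum_loss l T)
             >= c * Num.sqrt (T%:R * \big[Num.max/0]_(j < K) eps j ^+ 2)).
Proof.
exists (1 / 16); split; first lra.
move=> T K eps hT hK heps hcond.
exists (fun _ => 0).
have [js hjs] : exists js : 'I_K, forall j, eps j ^+ 2 <= eps js ^+ 2.
  have [v Hv] := exists_max_seq (fun j => eps j ^+ 2) (Ordinal (ltnW hK)) (enum 'I_K).
  by exists v => j; apply: Hv; rewrite mem_enum.
have hMax : \big[Num.max/0]_(j < K) eps j ^+ 2 = eps js ^+ 2.
  apply/le_anti/andP; split.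
    by apply: bigmax_le; [exact: sqr_ge0 | move=> j _; exact: hjs].
  exact: le_bigmax.
set e := eps js.
have he : 0 <= e by exact: heps.
have hTr : 0 <= T%:R :> RR by exact: ler0n.
have hsT : 0 <= Num.sqrt T%:R :> RR by exact: sqrtr_ge0.
have hes : 0 <= e * Num.sqrt T%:R by exact: mulr_ge0.
have sq1 : Num.sqrt (T%:R * e ^+ 2) = Num.sqrt T%:R * e.
  by rewrite sqrtrM // sqrtr_sqr ger0_norm.
split.
- move=> A Av.
  case: (lerP (\sum_(i < K) eps i ^+ 2) (4 * e ^+ 2)) => hS.
  + have hz : Ex fl_w (fl_vec js (eps js)) 0 T (fun l => bandit_expected_loss A l T) = 0.
      exact: (Ex_bandit_zero fl_w1 (fl_mean js (eps js)) A T [::]).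
    have [l [hl1 hl2]] := fluct_exists hK heps hz.
    exists l; split; first by move=> t j _; exact: hl1.
    apply: le_trans hl2.
    have h1 : Num.sqrt (T%:R * \sum_(i < K) eps i ^+ 2) <= Num.sqrt (T%:R * (4 * e ^+ 2)).
      by rewrite ler_sqrt; [apply: ler_wpM2l | apply: mulr_ge0 => //; apply: mulr_ge0 => //; exact: sqr_ge0].
    have h2 : Num.sqrt (T%:R * (4 * e ^+ 2)) = 2 * (Num.sqrt T%:R * e).
      have -> : 4 * e ^+ 2 = (2 * e) ^+ 2 by ring.
      by rewrite sqrtrM // sqrtr_sqr ger0_norm ?mulr_ge0 //; ring.
    rewrite h2 in h1.
    have h3 : 1 / 16 * Num.sqrt (T%:R * \sum_(i < K) eps i ^+ 2) <= 1 / 16 * (2 * (Num.sqrt T%:R * e)).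
      by apply: ler_wpM2l => //; lra.
    move: h3; rewrite /e; rewrite /e in hes; lra.
  + have [l [hl1 hl2]] := biased_exists Av hT hK heps hcond hjs hS.
    exists l; split; first by move=> t j _; exact: hl1.
    exact: hl2.
- move=> A Av.
  have hz : Ex fl_w (fl_vec js (eps js)) 0 T (fun l => full_expected_loss A l T) = 0.
    exact: (Ex_full_zero fl_w1 (fl_mean js (eps js)) A T [::]).
  have [l [hl1 hl2]] := fluct_exists hK heps hz.
  exists l; split; first by move=> t j _; exact: hl1.
  apply: le_trans hl2.
  rewrite hMax sq1 /e; rewrite /e in hes; lra.
Qed.
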